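(* Let $G$ be a finite group with $|G| = mp$, where $p$ is a prime and $m$ is a natural number such that $m/q < p < m$, where $q$ is the smallest prime divisor of $m$. Suppose that a Sylow $p$-subgroup of $G$ is not normal in $G$. Then $G$ possesses a characteristic abelian $p$-complement (a characteristic abelian subgroup of order $m$). *)

(* Defs.v *)
From mathcomp Require Import all_boot all_fingroup all_solvable.
Set Implicit Arguments. Unset Strict Implicit. Unset Printing Implicit Defensive.

(* Main.v *)
Require Import Defs.
From mathcomp Require Import all_boot all_fingroup all_solvable.
From mathcomp Require vcharacter.
From mathcomp Require Import zify.
Set Implicit Arguments. Unset Strict Implicit. Unset Printing Implicit Defensive.
Lemma aux_div (p m a b : nat) :
  (m < p * pdiv m)%N -> a * b = m -> (p < a)%N -> (1 < b)%N -> False.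
Proof.
move=> hm hab hpa hb.
have hq : (pdiv m <= b)%N by apply: pdiv_min_dvd => //; rewrite -hab dvdn_mull.
nia.
Qed.

Lemma aux_ge (p n : nat) : (1 < n)%N -> n %% p = 1 -> (p < n)%N.
Proof.
move=> h1 h2; rewrite ltnNge; apply/negP => hle.
case: (ltnP n p) => h; first by rewrite modn_small in h2; [lia|].
have hnp : n = p by apply/eqP; rewrite eqn_leq hle h.
by rewrite hnp modnn in h2.
Qed.

Import GroupScope.

Theorem lemma2 (gT : finGroupType) (G : {group gT}) (p m : nat) :
  prime p ->
  #|G| = (m * p)%N ->
  (m < p * pdiv m)%N ->
  (p < m)%N ->
  (exists2 P : {group gT}, P \in 'Syl_p(G) & ~~ (P <| G)) ->
  exists H : {group gT}, [/\ H \char G, abelian H & #|H| = m].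
Proof.
move=> pr_p oG hm hpm [P sylP nnP].
rewrite inE in sylP.
have p_gt1 := prime_gt1 pr_p.
have m_gt1 : (1 < m)%N by lia.
have m_gt0 : (0 < m)%N by lia.
have p'm : ~~ (p %| m).
  apply/negP => /dvdnP [k hk].
  have k_gt1 : (1 < k)%N by nia.
  have hq : (pdiv m <= pdiv k)%N.
    by apply: pdiv_min_dvd; [apply: prime_gt1; apply: pdiv_prime | rewrite hk dvdn_mulr // pdiv_dvd].
  have : (pdiv k <= k)%N by apply: dvdn_leq; [lia | apply: pdiv_dvd].
  have : (pdiv m <= p)%N by apply: pdiv_min_dvd => //; rewrite hk dvdn_mull.
  nia.
have oP : #|P| = p.
  have l0 : logn p m = 0%N.
    by apply/eqP; rewrite -leqn0 leqNgt logn_gt0 mem_primes pr_p m_gt0 (negbTE p'm).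
  rewrite (card_Hall sylP) p_part oG lognM //; last exact: prime_gt0.
  by rewrite l0 logn_prime // eqxx expn1.
have sPG : P \subset G := pHall_sub sylP.
have sPN : P \subset 'N_G(P) by rewrite subsetI sPG normG.
have eqNP : 'N_G(P) = P.
  pose n := #|G : 'N_G(P)|.
  have hn : n %% p = 1%N by rewrite /n -(card_Syl sylP) card_Syl_mod.
  have n1 : n != 1%N.
    apply: contra nnP; rewrite /n indexg_eq1 => sGN.
    by rewrite /normal sPG (subset_trans sGN) // subsetIr.
  have n_gt1 : (1 < n)%N by rewrite ltn_neqAle eq_sym n1 indexg_gt0.
  have pn := aux_ge n_gt1 hn.
  have L1 := Lagrange (subsetIl G 'N(P)).
  have L2 := Lagrange sPN.
  rewrite oP in L2.
  set k := #|'N_G(P) : P| in L2.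
  have hk : (n * k)%N = m.
    rewrite -L2 oG in L1; rewrite -/n in L1.
    apply/eqP; rewrite -(eqn_pmul2l (prime_gt0 pr_p)); apply/eqP.
    by rewrite [RHS]mulnC -L1 -!mulnA [(n * k)%N]mulnC.
  have k1 : k = 1%N.
    have k0 : (0 < k)%N by rewrite /k indexg_gt0.
    case: (ltnP 1 k) => hk1; last by lia.
    by case: (aux_div hm hk pn hk1).
  apply/eqP; rewrite eq_sym eqEcard sPN /= -L2 k1 muln1 oP leqnn //.
have ntP : P :!=: 1 by rewrite -cardG_gt1 oP.
have frobP : [Frobenius G with complement P].
  apply/andP; split.
    apply/eqP => ePG; move: oG; rewrite -ePG oP => e.
    have : (1 * p < m * p)%N by rewrite ltn_pmul2r ?prime_gt0.
    by rewrite mul1n -e ltnn.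
  apply/normedTI_P; split.
  - by rewrite setD_eq0 subG1.
  - by rewrite normD1 eqNP.
  move=> g Gg; rewrite -setI_eq0 => /set0Pn [x /setIP [/setD1P [ntx Px]]].
  rewrite conjD1g => /setD1P [_ Pgx].
  have sPPg : P \subset P :^ g.
    apply: prime_meetG; first by rewrite oP.
    by apply/trivgPn; exists x; rewrite // inE Px.
  have ePg : P :^ g = P.
    by apply/eqP; rewrite eq_sym eqEcard sPPg cardJg leqnn.
  by rewrite -eqNP inE Gg; apply/normP.
have [K frobG] := vcharacter.Frobenius_kernel_exists frobP.
have [defG ntK _ _ _] := Frobenius_context frobG.
have [nsKG _ _ nKP tiKP] := sdprod_context defG.
have oK : #|K| = m.
  have := sdprod_card defG; rewrite oP oG => e.
  by apply/eqP; rewrite -(eqn_pmul2r (prime_gt0 pr_p)) e.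
have regK := Frobenius_reg_ker frobG.
have Kmin : forall K1 : {group gT}, K1 \subset K -> P \subset 'N(K1) -> K1 :!=: 1 -> K1 = K.
  move=> K1 sK1K nK1P ntK1.
  have reg1 : semiregular K1 P := semiregularS sK1K (subxx _) regK.
  have dv := regular_norm_dvd_pred nK1P reg1.
  rewrite oP in dv.
  have g1 : (1 < #|K1|)%N by rewrite cardG_gt1.
  have pK1 : (p < #|K1|)%N.
    have : (0 < #|K1|.-1)%N by case: #|K1| g1 => [|[|n]].
    move=> h; have := dvdn_leq h dv; case: #|K1| g1 => [|[|n]] //.
  have /dvdnP [s hs] := cardSg sK1K.
  rewrite oK in hs.
  have s0 : (0 < s)%N by case: s hs => //= ; rewrite mul0n => e; rewrite e in m_gt0.
  case: (ltnP 1 s) => hs1.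
    by case: (aux_div hm (esym (etrans hs (mulnC _ _))) pK1 hs1).
  have s1 : s = 1%N by apply/eqP; rewrite eqn_leq hs1 s0.
  apply: val_inj => /=; apply/eqP; by rewrite eqEcard sK1K oK hs s1 mul1n leqnn.
have m_q : (pdiv m %| m)%N := pdiv_dvd m.
have pr_q : prime (pdiv m) := pdiv_prime m_gt1.
have solP : solvable P by apply/abelian_sol/cyclic_abelian/prime_cyclic; rewrite oP.
have coKP : coprime #|K| #|P| by rewrite oK oP coprime_sym prime_coprime.
have [Q sylQ nQP] := sol_coprime_Sylow_exists (pdiv m) solP nKP coKP.
have ntQ : Q :!=: 1.
  rewrite -cardG_gt1 (card_Hall sylQ) oK p_part_gt1 mem_primes pr_q m_gt0 m_q //.
have eQK := Kmin Q (pHall_sub sylQ) nQP ntQ.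
have qK : (pdiv m).-group K by rewrite -eQK; exact: pHall_pgroup sylQ.
have ntZ : 'Z(K) :!=: 1.
  by apply: contra ntK => /eqP /(trivg_center_pgroup qK) ->.
have eZ := Kmin _ (center_sub K) (char_norm_trans (center_char K) nKP) ntZ.
exists K; split => //.
- have hallK := Frobenius_ker_Hall frobG.
  rewrite -(normal_Hall_pcore (Hall_pi hallK) nsKG); exact: pcore_char.
- by apply/center_idP; exact: (congr1 val eZ).
Qed.
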